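(* Let $p$ be a prime, $n\ge1$, $\mathbb{F}=\mathbb{F}_{p^n}$, $F=p^n$, and $f,g:\mathbb{F}\to[0,1]$. Let $k$ be an integer with $2\le k\le F$, let $A$ be a set of $k$ points at which $|\hat f|$ takes its $k$ largest values (i.e. $|\hat f(a)|\ge|\hat f(b)|$ for all $a\in A$, $b\notin A$), and $B=A-A$. Let $n'$ be an integer with $$1+\frac{\log\binom{k}{2}}{\log p}\ \le\ n'\ <\ 2+\frac{\log\binom{k}{2}}{\log p},\qquad n'\le n,$$ and let $S$ be the set of all $\mathbb{F}_p$-subspaces of $\mathbb{F}$ of dimension $n'$. Suppose $\mathbb{E}(g)>8p^{-1/2}k^{-1}$. Then there exists $W\in S$ such that (i) $B\cap W^\perp=\{0\}$, and (ii) at least $F/4$ elements $t\in\mathbb{F}$ satisfy $\sum_{m\in t+W}g(m)\ge \mathbb{E}(g)|W|/2$.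
   Context: Identify $\mathbb{F}$ with $\mathbb{F}_p^n$ via a fixed standard $\mathbb{F}_p$-basis and let $a\cdot m$ be the dot product; $W^\perp=\{v: v\cdot w=0\ \forall w\in W\}$. With $\omega=e^{2\pi i/p}$, $\hat f(a)=\sum_m f(m)\omega^{a\cdot m}$. $\mathbb{E}(g)=F^{-1}\sum_m g(m)$. *)

(* Defs.v *)
From HB Require Import structures.
From mathcomp Require Import all_boot all_order all_algebra.
From mathcomp Require Import all_classical all_reals all_analysis.
From mathcomp Require Import complex.
Set Implicit Arguments. Unset Strict Implicit. Unset Printing Implicit Defensive.
Import Order.TTheory GRing.Theory Num.Theory ComplexField.
Local Open Scope ring_scope.

(* F_{p^n} is identified (as an F_p-vector space) with 'rV['F_p]_n via a fixed basis *)
Definition dotp (p n : nat) (a m : 'rV['F_p]_n) : 'F_p := \sum_(i < n) a ord0 i * m ord0 i.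

Definition Wperp (p n : nat) (W : {vspace 'rV['F_p]_n}) : {set 'rV['F_p]_n} :=
  [set v | [forall w, (w \in W) ==> (dotp v w == 0)]].

Definition omega (R : realType) (p : nat) : R[i] :=
  Complex (cos (2 * pi / p%:R)) (sin (2 * pi / p%:R)).

Definition fourier (R : realType) (p n : nat) (f : 'rV['F_p]_n -> R) (a : 'rV['F_p]_n) : R[i] :=
  \sum_m Complex (f m) 0 * omega R p ^+ (nat_of_ord (dotp a m)).

Definition expect (R : realType) (p n : nat) (g : 'rV['F_p]_n -> R) : R :=
  (p ^ n)%:R^-1 * \sum_m g m.

(* Main.v *)
Require Import Defs.
From HB Require Import structures.
From mathcomp Require Import all_boot all_order all_algebra all_field.
From mathcomp Require Import all_classical all_reals all_analysis.
From mathcomp Require Import complex.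
From mathcomp Require Import ring lra.
Import Order.TTheory GRing.Theory Num.Theory ComplexField.
Local Open Scope ring_scope.


Section Comb.
Variables (p n : nat).
Hypothesis Hp : prime p.
Local Notation V := 'rV['F_p]_n.

Lemma cardFp : #|'F_p| = p. Proof. exact: card_Fp. Qed.

Lemma cardV : #|{: V}| = (p ^ n)%N.
Proof. by rewrite card_mx cardFp mul1n. Qed.

Definition Zset (Q : pred 'I_n) : {set V} :=
  [set v : V | [forall j, ~~ Q j ==> (v 0 j == 0)]].

Lemma card_Zset (Q : pred 'I_n) : #|Zset Q| = (p ^ #|Q|)%N.
Proof.
pose phi (v : V) : {ffun 'I_n -> 'F_p} := [ffun j => v 0 j].
pose psi (f : {ffun 'I_n -> 'F_p}) : V := \row_j f j.
have phiK : cancel phi psi by move=> v; apply/matrixP=> i j; rewrite !mxE ffunE (ord1 i).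
have psiK : cancel psi phi by move=> f; apply/ffunP=> j; rewrite ffunE mxE.
rewrite -(card_imset _ (can_inj phiK)).
transitivity #|pffun_on (0 : 'F_p) Q predT|; last by rewrite card_pffun_on cardFp.
apply: eq_card => f; apply/imsetP/pffun_onP => [[v]|[H1 H2]].
  rewrite inE => /forallP Hv ->; split=> [|x _]; last by [].
  apply/fintype.subsetP=> j; rewrite inE ffunE; apply: contraR => Hj.
  by move: (Hv j); rewrite Hj.
exists (psi f); last by rewrite psiK.
rewrite inE; apply/forallP=> j; apply/implyP=> Hj; rewrite mxE.
apply/eqP; by apply: contraNeq Hj => Hf; apply: (fintype.subsetP H1); rewrite inE.
Qed.


Lemma card_ltn (n' : nat) : (n' <= n)%N -> #|[pred j : 'I_n | (j < n')%N]| = n'.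
Proof.
move=> Hn'.
have inj : injective (widen_ord Hn') by move=> x y H; apply: val_inj; exact: (congr1 val H).
rewrite -[RHS](card_ord n') -(fintype.card_image inj).
apply: eq_card => j; rewrite inE /=; apply/idP/fintype.imageP => [Hj|[i _ ->]] //.
  by exists (Ordinal Hj) => //; apply: val_inj.
by rewrite /= ltn_ord.
Qed.

Lemma card_geq (n' : nat) : (n' <= n)%N -> #|[pred j : 'I_n | ~~ (j < n')%N]| = (n - n')%N.
Proof.
move=> Hn'.
have := cardC [pred j : 'I_n | (j < n')%N]; rewrite card_ltn // card_ord => H.
have H2 : #|[pred j : 'I_n | ~~ (j < n')%N]| = #|[predC [pred j : 'I_n | (j < n')%N]]|.
  by apply: eq_card => j; rewrite !inE.
by rewrite H2; apply/eqP; rewrite -(eqn_add2l n') subnKC // H.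
Qed.

Variable n' : nat.
Hypothesis Hn' : (n' <= n)%N.

Definition W0 : {set V} := Zset (fun j => (j < n')%N).
Definition P0 : {set V} := Zset (fun j => ~~ (j < n')%N).

Lemma card_W0 : #|W0| = (p ^ n')%N.
Proof.
rewrite /W0 card_Zset; congr (_ ^ _)%N; rewrite -[RHS](card_ltn _ Hn').
by apply: eq_card.
Qed.

Lemma card_P0 : #|P0| = (p ^ (n - n'))%N.
Proof.
rewrite /P0 card_Zset; congr (_ ^ _)%N; rewrite -[RHS](card_geq _ Hn').
by apply: eq_card.
Qed.

Definition D0 : 'M['F_p]_n := diag_mx (\row_j (~~ (j < n')%N)%:R).

Lemma W0E v : (v \in W0) = (v *m D0 == 0).
Proof.
rewrite inE mul_mx_diag; apply/forallP/eqP => [H|H].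
  apply/rowP=> j; rewrite !mxE; have := H j.
  by case: (j < n')%N => /= [_|/eqP ->]; rewrite ?mulr0 ?mul0r.
move=> j; apply/implyP => Hj; have := congr1 (fun M : V => M 0 j) H.
by rewrite !mxE Hj mulr1 => ->.
Qed.

Lemma dotpE (a m : V) : dotp a m = (a *m m^T) 0 0.
Proof. by rewrite /dotp mxE; apply: eq_bigr => i _; rewrite mxE. Qed.

Definition W0perp : {set V} := [set v | [forall x in W0, dotp v x == 0]].

Lemma W0perp_sub : W0perp \subset P0.
Proof.
apply/fintype.subsetP => v; rewrite !inE => /forall_inP H.
apply/forallP => j; rewrite negbK; apply/implyP => Hj.
have Hx : delta_mx 0 j \in W0.
  rewrite inE; apply/forallP=> i; apply/implyP=> Hi; rewrite mxE.
  apply/eqP; case: eqP => //= _; case: eqP => // Eij.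
  by rewrite Eij Hj in Hi.
have := H _ Hx; rewrite /dotp (bigD1 j) //= big1 ?addr0.
  by rewrite mxE !eqxx mulr1.
by move=> i /negbTE Hij; rewrite mxE Hij andbF mulr0.
Qed.

Lemma mem0_W0 : (0 : V) \in W0.
Proof. by rewrite W0E mul0mx. Qed.

Lemma mem0_W0perp : (0 : V) \in W0perp.
Proof. by rewrite inE; apply/forall_inP => x _; rewrite dotpE mul0mx mxE. Qed.

End Comb.
Section Group.
Variables (p n : nat).
Local Notation V := 'rV['F_p]_n.
Local Notation MM := 'M['F_p]_n.

Lemma card_mulr_inv (M : MM) (Q : pred MM) : M \in unitmx ->
  #|[set T : MM | (T \in unitmx) && Q (T *m M)]| = #|[set T : MM | (T \in unitmx) && Q T]|.
Proof.
move=> uM; rewrite -(card_imset _ (can_inj (mulmxK uM))).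
apply: eq_card => T; apply/imsetP/idP => [[S] | H].
  by rewrite inE => /andP [uS QS] ->; rewrite inE unitmx_mul uS uM.
move: H; rewrite inE => /andP [uT QT].
exists (T *m invmx M); last by rewrite mulmxKV.
by rewrite inE unitmx_mul unitmx_inv uT uM mulmxKV.
Qed.

Lemma invmxM (A B : MM) : A \in unitmx -> B \in unitmx ->
  invmx (A *m B) = invmx B *m invmx A.
Proof.
move=> uA uB; have uAB : A *m B \in unitmx by rewrite unitmx_mul uA uB.
have E : A *m B *m (invmx B *m invmx A) = 1%:M.
  by rewrite mulmxA mulmxK // mulmxV.
by rewrite -[LHS]mulmx1 -E mulKmx.
Qed.

Lemma rank_nz (d : V) : d != 0 -> \rank d = 1%N.
Proof.
move=> nd; apply/eqP; rewrite eqn_leq rank_leq_row lt0n mxrank_eq0 nd.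
done.
Qed.

Lemma transitive_GL (d d' : V) : d != 0 -> d' != 0 ->
  exists2 S : MM, S \in unitmx & d' = d *m S.
Proof.
move=> nd nd'; have rk : \rank d = \rank d' by rewrite !rank_nz.
case: (eq_rank_unitmx rk) => f uf Hf.
have : (d' == d *m f)%MS by apply/eqmxP.
case/eqmxMunitP => P uP E.
exists ((P 0 0) *: f).
  by rewrite unitmxZ // -det_mx11 -unitmxE.
by rewrite E {1}(mx11_scalar P) mul_scalar_mx scalemxAr.
Qed.

Definition cnt (phi : MM -> MM) (X : {set V}) (d : V) :=
  #|[set T : MM | (T \in unitmx) && (d *m phi T \in X)]|.

Lemma cnt_const (phi : MM -> MM) (X : {set V}) :
  (forall S : MM, S \in unitmx -> exists2 M : MM, M \in unitmx &
     forall T, T \in unitmx -> phi (T *m M) = S *m phi T) ->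
  forall d d' : V, d != 0 -> d' != 0 -> cnt phi X d' = cnt phi X d.
Proof.
move=> Hphi d d' nd nd'.
case: (transitive_GL _ _ nd nd') => S uS ->.
case: (Hphi S uS) => M uM HM.
rewrite /cnt -(card_mulr_inv _ (fun T => d *m phi T \in X) uM).
apply: eq_card => T; rewrite !inE.
by case uT : (T \in unitmx) => //=; rewrite HM // mulmxA.
Qed.

Lemma card_condE (T : finType) (P Q : pred T) :
  #|[set x | P x && Q x]| = (\sum_(x | P x) (Q x : nat))%N.
Proof.
rewrite -sum1_card (eq_bigl (fun x => P x && Q x)); last by move=> x; rewrite inE.
by rewrite big_mkcondr /=; apply: eq_bigr => x _; case: (Q x).
Qed.

Lemma card_vec_inv (M : MM) (X : {set V}) : M \in unitmx -> (0 : V) \in X ->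
  #|[set d : V | (d != 0) && (d *m M \in X)]| = (#|X| - 1)%N.
Proof.
move=> uM X0; rewrite -(card_imset _ (can_inj (mulmxK uM))).
rewrite (cardsD1 0 X) X0 add1n subn1 /=.
apply: eq_card => e; apply/imsetP/idP => [[d] | H].
  rewrite inE => /andP [nd Xd] ->; rewrite !inE Xd andbT.
  by apply: contra nd => /eqP /(congr1 (mulmx^~ (invmx M))) /=; rewrite mulmxK // mul0mx => ->.
move: H; rewrite !inE => /andP [ne Xe].
exists (e *m invmx M); last by rewrite mulmxKV.
rewrite inE mulmxKV // Xe andbT.
by apply: contra ne => /eqP /(congr1 (mulmx^~ M)) /=; rewrite mulmxKV // mul0mx => ->.
Qed.

Lemma cnt_sum (phi : MM -> MM) (X : {set V}) :
  (forall T : MM, T \in unitmx -> phi T \in unitmx) -> (0 : V) \in X ->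
  (\sum_(d : V | d != 0%R) cnt phi X d = #|[set T : MM | T \in unitmx]| * (#|X| - 1))%N.
Proof.
move=> Hu X0.
rewrite /cnt (eq_bigr (fun d => \sum_(T : MM | T \in unitmx) (d *m phi T \in X : nat))%N); last first.
  by move=> d _; rewrite card_condE.
rewrite exchange_big /=.
rewrite (eq_bigr (fun _ => #|X| - 1)%N); last first.
  by move=> T uT; rewrite -card_condE card_vec_inv // Hu.
rewrite sum_nat_const; congr (_ * _)%N; apply: eq_card => T; rewrite inE.
done.
Qed.

Lemma cnt_eq (phi : MM -> MM) (X : {set V}) :
  (forall T : MM, T \in unitmx -> phi T \in unitmx) -> (0 : V) \in X ->
  (forall S : MM, S \in unitmx -> exists2 M : MM, M \in unitmx &
     forall T, T \in unitmx -> phi (T *m M) = S *m phi T) ->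
  forall d : V, d != 0 ->
  (cnt phi X d * (#|{: V}| - 1) = #|[set T : MM | T \in unitmx]| * (#|X| - 1))%N.
Proof.
move=> Hu X0 Hphi d nd.
rewrite -(cnt_sum phi X) //.
rewrite (eq_bigr (fun _ => cnt phi X d)); last by move=> d' nd'; apply: cnt_const.
rewrite sum_nat_const mulnC; congr (_ * _)%N.
rewrite subn1 -(cardC1 (0 : V)); apply: eq_card => x; rewrite !inE.
done.
Qed.

End Group.

Section Spaces.
Variables (p n n' : nat).
Hypothesis Hp : prime p.
Hypothesis Hn : (0 < n)%N.
Hypothesis Hn' : (n' <= n)%N.
Local Notation V := 'rV['F_p]_n.
Local Notation MM := 'M['F_p]_n.

Definition WT (T : MM) : {set V} := [set m | m *m invmx T \in W0 p n n'].
Definition WTv (T : MM) : {vspace V} :=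
  lker (linfun (mulmxr (invmx T *m D0 p n n'))).

Lemma memWTv T m : (m \in WTv T) = (m \in WT T).
Proof. by rewrite memv_ker lfunE /= inE W0E mulmxA. Qed.

Lemma card_pre_unit (M : MM) (X : {set V}) : M \in unitmx ->
  #|[set d : V | d *m M \in X]| = #|X|.
Proof.
move=> uM; rewrite -(card_imset _ (can_inj (mulmxK uM))).
apply: eq_card => e; apply/imsetP/idP => [[d] | H].
  by rewrite inE => Xd ->.
by exists (e *m invmx M); rewrite ?inE mulmxKV.
Qed.

Lemma card_WT T : T \in unitmx -> #|WT T| = (p ^ n')%N.
Proof.
by move=> uT; rewrite /WT card_pre_unit ?unitmx_inv // card_W0.
Qed.

Lemma dim_WTv T : T \in unitmx -> \dim (WTv T) = n'.
Proof.
move=> uT; have p1 : (1 < p)%N by apply: prime_gt1.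
have H := card_vspace (WTv T); rewrite card_Fp // in H.
apply: (expnI p1); rewrite -H -(card_WT _ uT).
by apply: eq_card => m; rewrite memWTv.
Qed.

Lemma card_GL_pos : (0 < #|[set T : MM | T \in unitmx]|)%N.
Proof. by apply/card_gt0P; exists 1%:M; rewrite inE unitmx1. Qed.

Lemma cnt_le (phi : MM -> MM) X d : (cnt p n phi X d <= #|[set T : MM | T \in unitmx]|)%N.
Proof.
by apply: subset_leq_card; apply/fintype.subsetP => T; rewrite !inE => /andP [].
Qed.

Lemma cardV_gt1 : (1 < #|{: V}|)%N.
Proof.
rewrite cardV //; have p1 : (1 < p)%N by apply: prime_gt1.
by rewrite -(expn0 p) ltn_exp2l // .
Qed.

Lemma cnt1_bound (d : V) : d != 0 ->
  (cnt p n invmx (W0 p n n') d * p ^ n <= #|[set T : MM | T \in unitmx]| * p ^ n')%N.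
Proof.
move=> nd.
have Hphi : forall S : MM, S \in unitmx -> exists2 M : MM, M \in unitmx &
     forall T, T \in unitmx -> invmx (T *m M) = S *m invmx T.
  move=> S uS; exists (invmx S); first by rewrite unitmx_inv.
  by move=> T uT; rewrite invmxM ?unitmx_inv // invmxK.
have E := cnt_eq p n invmx (W0 p n n') (fun T uT => etrans (unitmx_inv T) uT) (mem0_W0 p n n') Hphi d nd.
rewrite cardV // card_W0 // in E.
have Hc := cnt_le invmx (W0 p n n') d.
have F1 : (1 <= p ^ n)%N by rewrite expn_gt0 prime_gt0.
have w1 : (1 <= p ^ n')%N by rewrite expn_gt0 prime_gt0.
move: E Hc F1 w1.
set c := cnt _ _ _ _ _; set N := #|_|; set F := (p ^ n)%N; set w := (p ^ n')%N.
move=> E Hc F1 w1.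
have -> : (c * F = c * (F - 1) + c)%N by rewrite mulnBr muln1 subnK // leq_pmulr.
rewrite E; have -> : (N * w = N * (w - 1) + N)%N by rewrite mulnBr muln1 subnK // leq_pmulr.
by rewrite leq_add2l.
Qed.

Lemma cnt2_bound (b : V) : b != 0 ->
  (cnt p n trmx (W0perp p n n') b * p ^ n' <= #|[set T : MM | T \in unitmx]|)%N.
Proof.
move=> nb.
have Hphi : forall S : MM, S \in unitmx -> exists2 M : MM, M \in unitmx &
     forall T, T \in unitmx -> (T *m M)^T = S *m T^T.
  move=> S uS; exists S^T; first by rewrite unitmx_tr.
  by move=> T uT; rewrite trmx_mul trmxK.
have E := cnt_eq p n trmx (W0perp p n n') (fun T uT => etrans (unitmx_tr T) uT) (mem0_W0perp p n n') Hphi b nb.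
rewrite cardV // in E.
have Hc := cnt_le trmx (W0perp p n n') b.
have F2 : (1 < p ^ n)%N by rewrite -(cardV p n Hp); exact: cardV_gt1.
have w1 : (1 <= p ^ n')%N by rewrite expn_gt0 prime_gt0.
have X1 : (1 <= #|W0perp p n n'|)%N by apply/card_gt0P; exists 0; exact: mem0_W0perp.
have Xw : (#|W0perp p n n'| * p ^ n' <= p ^ n)%N.
  have -> : (p ^ n = p ^ n' * p ^ (n - n'))%N by rewrite -expnD subnKC.
  rewrite mulnC leq_mul2l.
  by rewrite -card_P0 // subset_leq_card ?W0perp_sub ?orbT.
move: E Hc F2 w1 X1 Xw.
set c := cnt _ _ _ _ _; set N := #|[set T : MM | _]|; set F := (p ^ n)%N; set w := (p ^ n')%N.
set x := #|W0perp p n n'|.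
move=> E Hc F2 w1 X1 Xw.
have F1 : (0 < F - 1)%N by rewrite subn_gt0.
rewrite -(leq_pmul2r F1) mulnAC E -mulnA leq_mul2l; apply/orP; right.
by rewrite mulnBl mul1n; apply: leq_sub.
Qed.

End Spaces.


Section Perp.
Variables (p n n' : nat).
Local Notation V := 'rV['F_p]_n.
Local Notation MM := 'M['F_p]_n.

Lemma dotp_mul (b x : V) (T : MM) : dotp b (x *m T) = dotp (b *m T^T) x.
Proof. by rewrite !dotpE trmx_mul !mulmxA. Qed.

Lemma perp_WT (T : MM) (b : V) : T \in unitmx ->
  (b \in Wperp (WTv p n n' T)) = (b *m T^T \in W0perp p n n').
Proof.
move=> uT; rewrite !inE; apply/forallP/forall_inP => [H x Hx | H w].
  have := H (x *m T); rewrite memWTv inE mulmxK // Hx /= => /eqP.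
  by rewrite dotp_mul => ->.
apply/implyP; rewrite memWTv inE => Hw.
have := H _ Hw; rewrite -dotp_mul mulmxKV //.
Qed.

Lemma perpN (W : {vspace V}) (b : V) : (- b \in Wperp W) = (b \in Wperp W).
Proof.
have E w : dotp (- b) w = - dotp b w.
  by rewrite /dotp -sumrN; apply: eq_bigr => i _; rewrite mxE mulNr.
by rewrite !inE; apply/forallP/forallP => H w; have := H w; rewrite E oppr_eq0.
Qed.

Lemma perp0 (W : {vspace V}) : (0 : V) \in Wperp W.
Proof. by rewrite inE; apply/forallP => w; rewrite dotpE mul0mx mxE eqxx implybT. Qed.

End Perp.

Section Real.
Variables (R : realType) (p n n' : nat).
Hypothesis Hp : prime p.
Hypothesis Hn : (0 < n)%N.
Hypothesis Hn' : (n' <= n)%N.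
Local Notation V := 'rV['F_p]_n.
Local Notation MM := 'M['F_p]_n.
Variable g : V -> R.
Hypothesis Hg : forall m, 0 <= g m <= 1.

Local Notation S := (\sum_t g t).
Definition hh (T : MM) (t : V) := \sum_(m in WT p n n' T) g (t + m).
Definition CC (d : V) := \sum_t g t * g (t + d).

Lemma sum_shift (m : V) : \sum_t g (t + m) = S.
Proof. by rewrite [RHS](reindex_inj (addIr m)). Qed.

Lemma sum_shiftl (m : V) : \sum_t g (m + t) = S.
Proof. by rewrite [RHS](reindex_inj (addrI m)). Qed.

Lemma sum_hh T : T \in unitmx -> \sum_t hh T t = (p ^ n')%:R * S.
Proof.
move=> uT; rewrite /hh exchange_big /=.
rewrite (eq_bigr (fun _ => S)); last by move=> m _; exact: sum_shift.
by rewrite sumr_const card_WT // mulr_natl.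
Qed.

Lemma WT_closed T (m d : V) : m \in WT p n n' T -> (d + m \in WT p n n' T) = (d \in WT p n n' T).
Proof.
rewrite -!memWTv => Hm; apply/idP/idP => H.
  by rewrite -(addrK m d) rpredB.
by rewrite rpredD.
Qed.

Lemma sum_hh2 T : T \in unitmx ->
  \sum_t hh T t ^+ 2 = (p ^ n')%:R * \sum_(d in WT p n n' T) CC d.
Proof.
move=> uT; rewrite /hh.
transitivity (\sum_t \sum_(m in WT p n n' T) \sum_(m' in WT p n n' T) g (t + m) * g (t + m')).
  by apply: eq_bigr => t _; rewrite expr2 mulr_suml; apply: eq_bigr => m _; rewrite mulr_sumr.
rewrite exchange_big /=.
rewrite (eq_bigr (fun _ => \sum_(d in WT p n n' T) CC d)); last first.
  move=> m Hm; rewrite exchange_big /=.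
  rewrite (reindex_inj (addIr m)) /=.
  rewrite (eq_bigl (fun d => d \in WT p n n' T)); last by move=> d; rewrite WT_closed.
  apply: eq_bigr => d _; rewrite /CC (reindex_inj (addIr (- m))) /=.
  apply: eq_bigr => t _; congr (g _ * g _); first by rewrite addrNK.
  by rewrite [d + m]addrC addrA addrNK.
by rewrite sumr_const card_WT // mulr_natl.
Qed.

Lemma sum_CC : \sum_d CC d = S ^+ 2.
Proof.
rewrite /CC exchange_big /= expr2 mulr_suml; apply: eq_bigr => t _.
by rewrite -mulr_sumr sum_shiftl.
Qed.

Lemma CC_ge0 d : 0 <= CC d.
Proof.
apply: sumr_ge0 => t _; apply: mulr_ge0; [by case/andP: (Hg t) | by case/andP: (Hg (t + d))].
Qed.

Lemma CC0_le : CC 0 <= S.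
Proof.
apply: ler_sum => t _; rewrite addr0; case/andP: (Hg t) => g0 g1.
by rewrite -[leRHS]mulr1 ler_wpM2l.
Qed.


Local Notation N := (#|[set T : MM | T \in unitmx]|).
Local Notation cnt1 := (cnt p n invmx (W0 p n n')).

Lemma sum_T_WT : \sum_(T | T \in unitmx) \sum_(d in WT p n n' T) CC d
   = \sum_d (cnt1 d)%:R * CC d.
Proof.
under eq_bigr do rewrite big_mkcond /=.
rewrite exchange_big /=; apply: eq_bigr => d _.
rewrite -big_mkcondr /=.
rewrite (eq_bigl (fun T => T \in [set T : MM | (T \in unitmx) && (d *m invmx T \in W0 p n n')])); last first.
  by move=> T; rewrite !inE.
by rewrite sumr_const mulr_natl.
Qed.

Lemma cnt1_real (d : V) : d != 0 ->
  (cnt1 d)%:R <= N%:R * (p ^ n')%:R / (p ^ n)%:R :> R.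
Proof.
move=> nd; have F0 : 0 < (p ^ n)%:R :> R by rewrite ltr0n expn_gt0 prime_gt0.
rewrite ler_pdivlMr // -!natrM ler_nat; exact: cnt1_bound.
Qed.

Lemma sum_T_bound : \sum_(T | T \in unitmx) \sum_(d in WT p n n' T) CC d
   <= N%:R * CC 0 + N%:R * (p ^ n')%:R / (p ^ n)%:R * S ^+ 2.
Proof.
rewrite sum_T_WT (bigD1 0) //=; apply: lerD.
  by apply: ler_wpM2r; [exact: CC_ge0 | rewrite ler_nat cnt_le].
apply: (@le_trans _ _ (\sum_(d | d != 0) N%:R * (p ^ n')%:R / (p ^ n)%:R * CC d)).
  by apply: ler_sum => d nd; apply: ler_wpM2r; [exact: CC_ge0 | exact: cnt1_real].
rewrite -mulr_sumr; apply: ler_wpM2l.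
  by apply: mulr_ge0; [apply: mulr_ge0|rewrite invr_ge0]; rewrite ler0n.
by rewrite -sum_CC [X in _ <= X](bigD1 0) //= lerDr CC_ge0.
Qed.

Definition aa := S * (p ^ n')%:R / (p ^ n)%:R.

Lemma var_T T : T \in unitmx ->
  \sum_t (hh T t - aa) ^+ 2 = \sum_t hh T t ^+ 2 - (p ^ n')%:R ^+ 2 * S ^+ 2 / (p ^ n)%:R.
Proof.
move=> uT; have F0 : (p ^ n)%:R != 0 :> R by rewrite pnatr_eq0 -lt0n expn_gt0 prime_gt0.
rewrite (eq_bigr (fun t => hh T t ^+ 2 - (2 * aa) * hh T t + aa ^+ 2)); last first.
  by move=> t _; rewrite sqrrB mulr2n; ring.
rewrite big_split /= sumrB -mulr_sumr sum_hh // sumr_const cardV //.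
rewrite /aa; field.
done.
Qed.


Lemma sum_var : \sum_(T | T \in unitmx) \sum_t (hh T t - aa) ^+ 2
   <= (p ^ n')%:R * N%:R * S.
Proof.
under eq_bigr => T uT do rewrite var_T //.
rewrite sumrB.
under eq_bigr => T uT do rewrite sum_hh2 //.
rewrite -mulr_sumr.
have HN : \sum_(T : MM | T \in unitmx) ((p ^ n')%:R ^+ 2 * S ^+ 2 / (p ^ n)%:R)
   = N%:R * ((p ^ n')%:R ^+ 2 * S ^+ 2 / (p ^ n)%:R) :> R.
  rewrite (eq_bigl (fun T => T \in [set T : MM | T \in unitmx])); last by move=> T; rewrite inE.
  by rewrite sumr_const mulr_natl.
rewrite HN.
have w0 : 0 <= (p ^ n')%:R :> R by rewrite ler0n.
apply: (@le_trans _ _ ((p ^ n')%:R * (N%:R * CC 0 + N%:R * (p ^ n')%:R / (p ^ n)%:R * S ^+ 2)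
   - N%:R * ((p ^ n')%:R ^+ 2 * S ^+ 2 / (p ^ n)%:R))).
  by rewrite lerD2r ler_wpM2l // sum_T_bound.
have -> : (p ^ n')%:R * (N%:R * CC 0 + N%:R * (p ^ n')%:R / (p ^ n)%:R * S ^+ 2)
   - N%:R * ((p ^ n')%:R ^+ 2 * S ^+ 2 / (p ^ n)%:R) = (p ^ n')%:R * N%:R * CC 0 :> R.
  by ring.
by apply: ler_wpM2l; [rewrite mulr_ge0 // ler0n | exact: CC0_le].
Qed.

Definition good T := #|[set t : V | aa / 2 <= hh T t]|.
Definition fail2 T : bool := (good T)%:R < (p ^ n)%:R / 4 :> R.

Lemma aa_ge0 : 0 <= aa.
Proof.
rewrite /aa; apply: mulr_ge0; last by rewrite invr_ge0 ler0n.
apply: mulr_ge0; last by rewrite ler0n.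
by apply: sumr_ge0 => t _; case/andP: (Hg t).
Qed.

Lemma cheb T : (fail2 T)%:R * ((p ^ n)%:R * 3 / 4 * (aa / 2) ^+ 2)
   <= \sum_t (hh T t - aa) ^+ 2.
Proof.
have Hs : 0 <= \sum_t (hh T t - aa) ^+ 2 by apply: sumr_ge0 => t _; exact: sqr_ge0.
case Hf : (fail2 T); last by rewrite mul0r.
rewrite mul1r (bigID (fun t => aa / 2 <= hh T t)) /=.
apply: (@le_trans _ _ (\sum_(t | ~~ (aa / 2 <= hh T t)) (hh T t - aa) ^+ 2)); last first.
  by rewrite lerDr; apply: sumr_ge0 => t _; exact: sqr_ge0.
apply: (@le_trans _ _ (\sum_(t | ~~ (aa / 2 <= hh T t)) (aa / 2) ^+ 2)); last first.
  apply: ler_sum => t; rewrite -ltNge => Ht; have := aa_ge0 => a0.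
  nra.
rewrite sumr_const -[(aa / 2) ^+ 2 *+ _]mulr_natl; apply: ler_wpM2r; first exact: sqr_ge0.
set b := #|_|.
have Hc : (b + good T = p ^ n)%N.
  rewrite /b -(cardV p n Hp) -(cardC [pred t : V | (aa / 2 <= hh T t)%R]) addnC /good.
  congr (_ + _)%N; apply: eq_card => t; rewrite !inE //.
have E : ((p ^ n)%:R = b%:R + (good T)%:R :> R) by rewrite -natrD Hc.
move: Hf; rewrite /fail2 => Hf.
lra.
Qed.

Lemma sum_fail2 : (\sum_(T | T \in unitmx) (fail2 T)%:R) * ((p ^ n)%:R * 3 / 4 * (aa / 2) ^+ 2)
   <= (p ^ n')%:R * N%:R * S.
Proof.
apply: le_trans sum_var; rewrite mulr_suml; apply: ler_sum => T _; exact: cheb.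
Qed.


Variable A : {set V}.
Definition fail1 T : bool :=
  [exists a in A, exists a' in A, (a != a') && (a - a' \in Wperp (WTv p n n' T))].

Lemma fail1_le T : (fail1 T * 2 <=
  \sum_(a in A) \sum_(a' in A | a' != a) ((a - a')%R \in Wperp (WTv p n n' T) : nat))%N.
Proof.
case Hf: (fail1 T); last by rewrite mul0n.
case/exists_inP: Hf => a Aa /exists_inP [a' Aa' /andP [naa' Hw]].
have Hw' : a' - a \in Wperp (WTv p n n' T) by rewrite -perpN opprB.
have H2 : (1 <= \sum_(i in A | i != a) \sum_(a'0 in A | a'0 != i)
    ((i - a'0)%R \in Wperp (WTv p n n' T) : nat))%N.
  rewrite (bigD1 a') /=; last by rewrite Aa' eq_sym naa'.
  rewrite (bigD1 a) /=; last by rewrite Aa naa'.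
  by rewrite Hw' -addnA leq_addr.
rewrite (bigD1 a) //= (bigD1 a') /=; last by rewrite Aa' eq_sym naa'.
rewrite Hw mul1n; apply: leq_trans (leq_add (leqnn 1) H2) _.
by rewrite -addnA leq_add2l leq_addl.
Qed.

Lemma sum_fail1 :
  ((\sum_(T | T \in unitmx) fail1 T * 2) * p ^ n' <= #|A| * (#|A| - 1) * N)%N.
Proof.
apply: (@leq_trans ((\sum_(a in A) \sum_(a' in A | a' != a)
     cnt p n trmx (W0perp p n n') (a - a')%R) * p ^ n')%N).
  rewrite leq_mul2r; apply/orP; right.
  apply: (@leq_trans (\sum_(T | T \in unitmx) \sum_(a in A) \sum_(a' in A | a' != a)
      ((a - a')%R \in Wperp (WTv p n n' T) : nat))%N).
    by apply: leq_sum => T _; apply: fail1_le.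
  rewrite exchange_big /=; apply: leq_sum => a _; rewrite exchange_big /=; apply: leq_sum => a' _.
  rewrite /cnt card_condE; apply: eq_leq; apply: eq_bigr => T uT; rewrite perp_WT //.
rewrite big_distrl /=.
apply: (@leq_trans (\sum_(a in A) (#|A| - 1) * N)%N).
  apply: leq_sum => a Aa; rewrite big_distrl /=.
  apply: (@leq_trans (\sum_(a' in A | a' != a) N)%N).
    apply: leq_sum => a' /andP [_ na]; apply: cnt2_bound => //.
    by rewrite subr_eq0 eq_sym.
  rewrite sum_nat_const; apply: eq_leq; congr (_ * _)%N.
  rewrite (cardsD1 a A) Aa add1n subn1 /=; apply: eq_card => x; rewrite !inE.
  by rewrite andbC.
by rewrite sum_nat_const mulnA.
Qed.

End Real.


Lemma final_arith (R : realType) (N N1 N2 F w S p k : R) :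
  0 < N -> 2 <= p -> 2 <= k -> 0 < F -> 0 < w -> S <= F -> 0 <= N1 -> 0 <= N2 ->
  p * (k * (k - 1)) <= 2 * w ->
  8 * F < S * Num.sqrt p * k ->
  2 * N1 * w <= k * (k - 1) * N ->
  N2 * (F * 3 / 4 * (S * w / F / 2) ^+ 2) <= w * N * S ->
  N1 + N2 < N.
Proof.
move=> N0 p2 k2 F0 w0 SF N10 N20 hw hE h1 h2.
have s0 : 0 < Num.sqrt p by rewrite sqrtr_gt0; lra.
have ss : Num.sqrt p ^+ 2 = p by rewrite sqr_sqrtr //; lra.
move: hE s0 ss; set s := Num.sqrt p; clearbody s => hE s0 ss.
have S0 : 0 < S.
  have : 0 < S * s * k by apply: lt_trans hE; lra.
  by rewrite -mulrA pmulr_lgt0 //; apply: mulr_gt0 => //; lra.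
have e1 : N1 * p <= N.
  have : 2 * N1 * w * p <= k * (k - 1) * N * p by apply: ler_wpM2r => //; lra.
  have : p * (k * (k - 1)) * N <= 2 * w * N by apply: ler_wpM2r => //; lra.
  move=> H1 H2; have : 2 * w * (N1 * p) <= 2 * w * N by nra.
  by rewrite ler_pM2l //; lra.
have e1' : N1 * 2 <= N by nra.
have sk : 8 < s * k.
  have : S * s * k <= F * s * k by apply: ler_wpM2r; [lra | apply: ler_wpM2r => //; lra].
  move=> H; have : 8 * F < F * (s * k) by rewrite mulrA; apply: lt_le_trans hE H.
  by move=> H2; rewrite -(ltr_pM2l F0) [F * 8]mulrC.
have Sw : 16 * F < S * w.
  have : S * (p * k ^+ 2) <= 4 * (S * w).
    have : p * k ^+ 2 <= 4 * w by nra.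
    by move=> H; nra.
  have : S * (p * k ^+ 2) = (S * s * k) * (s * k) by rewrite -ss; ring.
  move=> -> H; have : 8 * F * 8 < (S * s * k) * (s * k).
    by apply: ltr_pM; lra.
  lra.
have e2 : N2 * (3 * (S * w)) <= 16 * F * N.
  have E : F * 3 / 4 * (S * w / F / 2) ^+ 2 = (S * w) * (3 * (S * w)) / (16 * F).
    by field; lra.
  rewrite E in h2.
  have : N2 * (3 * (S * w)) * (S * w) <= 16 * F * N * (S * w).
    have H : N2 * ((S * w) * (3 * (S * w)) / (16 * F)) * (16 * F) <= w * N * S * (16 * F).
      by apply: ler_wpM2r => //; lra.
    have : N2 * ((S * w) * (3 * (S * w)) / (16 * F)) * (16 * F) = N2 * (3 * (S * w)) * (S * w).
      by field; lra.
    by move=> <-; lra.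
  by rewrite ler_pM2r //; apply: mulr_gt0.
have : N2 * 3 * (16 * F) <= 16 * F * N by nra.
move=> H; have : N2 * 3 <= N.
  have : (N2 * 3) * (16 * F) <= N * (16 * F) by lra.
  by rewrite ler_pM2r //; lra.
lra.
Qed.

Lemma ln_bound (R : realType) (p c n' : nat) : (1 < p)%N -> (0 < c)%N ->
  (1 : R) + ln (c%:R : R) / ln (p%:R : R) <= n'%:R -> (p * c <= p ^ n')%N.
Proof.
move=> p1 c0 H.
have lp : 0 < ln (p%:R : R) by apply: ln_gt0; rewrite ltr1n.
have lc : 0 <= ln (c%:R : R) by apply: ln_ge0; rewrite ler1n.
have n1 : (1 <= n')%N.
  rewrite -(ler_nat R); apply: le_trans H; rewrite lerDl; apply: divr_ge0 => //; exact: ltW.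
case: n' n1 H => // m _ H.
have H2 : ln (c%:R : R) <= ln ((p ^ m)%:R : R).
  rewrite natrX lnXn ?ltr0n ?(ltn_trans _ p1) // -[_ *+ m]mulr_natl -ler_pdivrMr //.
  by move: H; rewrite -addn1 natrD addrC lerD2r.
rewrite ler_ln ?posrE ?ltr0n ?expn_gt0 ?(ltn_trans _ p1) // ler_nat in H2.
by rewrite expnS leq_mul2l H2 orbT.
Qed.


Theorem corollary2 (R : realType) (p n : nat) (f g : 'rV['F_p]_n -> R)
  (k n' : nat) (A : {set 'rV['F_p]_n}) :
  prime p -> (1 <= n)%N ->
  (forall m, 0 <= f m <= 1) -> (forall m, 0 <= g m <= 1) ->
  (2 <= k)%N -> (k <= p ^ n)%N ->
  #|A| = k ->
  (forall a b, a \in A -> b \notin A -> `|fourier f b| <= `|fourier f a|) ->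
  (1 : R) + ln ('C(k, 2))%:R / ln (p%:R : R) <= n'%:R ->
  (n'%:R : R) < 2 + ln ('C(k, 2))%:R / ln (p%:R : R) ->
  (n' <= n)%N ->
  expect g > 8 * (Num.sqrt (p%:R : R))^-1 * k%:R^-1 ->
  exists W : {vspace 'rV['F_p]_n},
    \dim W = n' /\
    [set x in [set a - b | a in A, b in A] | x \in Wperp W] = [set 0] /\
    ((p ^ n)%:R / 4 : R) <=
      #|[set t : 'rV['F_p]_n |
          expect g * #|[set m : 'rV['F_p]_n | m \in W]|%:R / 2
            <= \sum_(m : 'rV['F_p]_n | m \in W) g (t + m)]|%:R.
Proof.
move=> Hp Hn _ Hg Hk2 HkF HA _ Hln1 _ Hn' HE.
have p1 : (1 < p)%N := prime_gt1 Hp.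
have c0 : (0 < 'C(k, 2))%N by rewrite bin_gt0.
have Hw := @ln_bound R _ _ _ p1 c0 Hln1.
have F0 : 0 < (p ^ n)%:R :> R by rewrite ltr0n expn_gt0 prime_gt0.
have SF : \sum_t g t <= (p ^ n)%:R.
  apply: (@le_trans _ _ (\sum_(t : 'rV['F_p]_n) 1)).
    by apply: ler_sum => t _; case/andP: (Hg t).
  by rewrite sumr_const cardV // mulr_natl.
have [T uT [nf1 nf2]] : exists2 T : 'M['F_p]_n, T \in unitmx &
    (~~ fail1 p n n' A T /\ ~~ fail2 R p n n' g T).
  case: (boolP [exists T : 'M['F_p]_n, (T \in unitmx) && ~~ fail1 p n n' A T && ~~ fail2 R p n n' g T]).
    by case/existsP => T /andP [/andP [uT a] b]; exists T.
  move=> Hno; exfalso.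
  set N := #|[set T : 'M['F_p]_n | T \in unitmx]|.
  set N1 := \sum_(T : 'M['F_p]_n | T \in unitmx) ((fail1 p n n' A T)%:R : R).
  set N2 := \sum_(T : 'M['F_p]_n | T \in unitmx) ((fail2 R p n n' g T)%:R : R).
  have HNN : (N%:R : R) <= N1 + N2.
    rewrite /N1 /N2 -big_split /=.
    have -> : (N%:R : R) = \sum_(T : 'M['F_p]_n | T \in unitmx) 1.
      rewrite (eq_bigl (fun T => T \in [set T : 'M['F_p]_n | T \in unitmx])); last by move=> T; rewrite inE.
      by rewrite sumr_const.
    apply: ler_sum => T uT; move/existsPn: Hno => /(_ T); rewrite uT /=.
    by case: (fail1 p n n' A T); case: (fail2 R p n n' g T) => //= _; lra.
  have H1 : 2 * N1 * (p ^ n')%:R <= k%:R * (k%:R - 1) * N%:R.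
    have := @sum_fail1 p n n' Hp Hn Hn' A; rewrite HA -(ler_nat R) !natrM natr_sum natrB; last exact: ltnW.
    under eq_bigr do rewrite natrM.
    rewrite -mulr_suml -/N1 => H; apply: le_trans H.
    by rewrite [2 * N1]mulrC.
  have H2 := @sum_fail2 R p n n' Hp Hn' g Hg.
  rewrite -/N -/N2 /aa in H2.
  have s0 : 0 < Num.sqrt (p%:R : R) by rewrite sqrtr_gt0 ltr0n prime_gt0.
  have k0 : 0 < k%:R :> R by rewrite ltr0n; apply: leq_trans Hk2.
  have H3 : 8 * (p ^ n)%:R < (\sum_t g t) * Num.sqrt (p%:R : R) * k%:R.
    have Fsk : 0 < (p ^ n)%:R * Num.sqrt (p%:R : R) * k%:R by rewrite !mulr_gt0.
    move: HE; rewrite /expect -(ltr_pM2r Fsk).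
    have -> : 8 / Num.sqrt (p%:R : R) / k%:R * ((p ^ n)%:R * Num.sqrt (p%:R : R) * k%:R)
       = 8 * (p ^ n)%:R by field; rewrite !gt_eqF.
    have -> : (p ^ n)%:R^-1 * (\sum_t g t) * ((p ^ n)%:R * Num.sqrt (p%:R : R) * k%:R)
       = (\sum_t g t) * Num.sqrt (p%:R : R) * k%:R by field; rewrite !gt_eqF.
    done.
  have H4 : p%:R * (k%:R * (k%:R - 1)) <= 2 * (p ^ n')%:R :> R.
    have E : ('C(k, 2) * 2 = k * (k - 1))%N.
      by rewrite mulnC -[2%N]/(1.+1)%N -mul_bin_diag bin1 subn1.
    have : (p * (k * (k - 1)) <= 2 * p ^ n')%N by rewrite -E mulnA mulnC leq_mul2l Hw orbT.
    rewrite -(ler_nat R) !natrM natrB; last exact: ltnW.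
    done.
  have N0 : 0 < N%:R :> R by rewrite ltr0n card_GL_pos.
  have p2 : 2 <= p%:R :> R by rewrite ler_nat.
  have k2 : 2 <= k%:R :> R by rewrite ler_nat.
  have w0 : 0 < (p ^ n')%:R :> R by rewrite ltr0n expn_gt0 prime_gt0.
  have N10 : 0 <= N1 by apply: sumr_ge0 => T _; rewrite ler0n.
  have N20 : 0 <= N2 by apply: sumr_ge0 => T _; rewrite ler0n.
  have := @final_arith R _ _ _ _ _ _ _ _ N0 p2 k2 F0 w0 SF N10 N20 H4 H3 H1 H2.
  lra.
exists (WTv p n n' T); split; first exact: dim_WTv.
split.
  apply/setP => x; rewrite !inE.
  apply/andP/eqP => [[/imset2P [a b Aa Ab ->] Hx] | ->].
    case: (eqVneq a b) => [-> | nab]; first by rewrite subrr.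
    exfalso; move/negP: nf1; apply; apply/exists_inP; exists a => //.
    by apply/exists_inP; exists b => //; rewrite nab /= inE.
  split; last by have := perp0 p n (WTv p n n' T); rewrite inE.
  have : (0 < #|A|)%N by rewrite HA; apply: leq_trans Hk2.
  case/card_gt0P => a0 Aa0; apply/imset2P; exists a0 a0 => //; by rewrite subrr.
move: nf2; rewrite /fail2 -leNgt => H; apply: le_trans H _.
rewrite ler_nat; apply: eq_leq; apply: eq_card => t; rewrite !inE.
have -> : #|[set m : 'rV['F_p]_n | m \in WTv p n n' T]| = (p ^ n')%N.
  by rewrite -(card_WT p n n' Hp Hn' T uT); apply: eq_card => m; rewrite inE memWTv.
have -> : \sum_(m | m \in WTv p n n' T) g (t + m) = hh R p n n' g T t.
  by rewrite /hh; apply: eq_bigl => m; rewrite memWTv.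
congr (_ <= _); rewrite /expect /aa; ring.
Qed.
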